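(* Let $\beta_0,n,\delta,r,k>0$. Let $\mathcal{B}_+$ be the set of continuous functions $\phi:[-r,0]\to[0,\infty)$. Define $G(u)=\int_0^u\frac{2s}{1+s^n}\,ds$ for $u\ge0$, and $$V(\phi)=G(\phi(0))+k\beta_0\int_{-r}^{0}\frac{\phi(s)^2}{(1+\phi(s)^n)^2}\,ds,\qquad \phi\in\mathcal{B}_+.$$ For $\phi\in\mathcal{B}_+$ let $x(\cdot,\phi)$ denote the solution of $$\dot{x}(t)=-\Big[\frac{\beta_0}{1+x(t)^n}+\delta\Big]x(t)+k\,\frac{\beta_0\,x(t-r)}{1+x(t-r)^n}$$ with $x(s,\phi)=\phi(s)$ on $[-r,0]$, let $x_h(\phi)\in\mathcal{B}_+$ be $x_h(\phi)(s)=x(h+s,\phi)$, and set $\dot V(\phi)=\limsup_{h\to0^+}\frac1h[V(x_h(\phi))-V(\phi)]$. Then for every $\phi\in\mathcal{B}_+$, $$\dot V(\phi)\le 2(k\beta_0-\beta_0-\delta)\,\frac{\phi(0)^2}{(1+\phi(0)^n)^2}.$$ In particular, if $k\beta_0=\beta_0+\delta$, then $\dot V(\phi)\le 0$ for all $\phi\in\mathcal{B}_+$.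
   Context: The solution $x(\cdot,\phi)$ exists on $[-r,\infty)$, is unique and nonnegative for nonnegative continuous initial data. *)

(* Defs.v *)
From Stdlib Require Import Reals Lra ClassicalEpsilon.
Open Scope R_scope.

(* Real power with positive exponent, extended by 0 at 0 (and, irrelevantly, on negatives). *)
Definition rpow (x a : R) : R :=
  if Rle_dec x 0 then 0 else Rpower x a.

(* Total Riemann integral: the Riemann integral if f is Riemann integrable on [a,b], 0 otherwise.
   (RiemannInt is independent of the integrability proof, RiemannInt_P5.) *)
Definition Rint (f : R -> R) (a b : R) : R :=
  match excluded_middle_informative
          (exists _ : Riemann_integrable f a b, True) with
  | left H => RiemannInt (proj1_sig (constructive_indefinite_description _ H))
  | right _ => 0
  end.

Definition continuous_on (f : R -> R) (a b : R) : Prop :=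
  forall s, a <= s <= b -> forall eps, 0 < eps -> exists d, 0 < d /\
    forall t, a <= t <= b -> Rabs (t - s) < d -> Rabs (f t - f s) < eps.

Definition Gfun (n u : R) : R := Rint (fun s => 2 * s / (1 + rpow s n)) 0 u.

Definition gsq (n y : R) : R := y ^ 2 / (1 + rpow y n) ^ 2.

Definition Vfun (beta0 n k r : R) (phi : R -> R) : R :=
  Gfun n (phi 0) + k * beta0 * Rint (fun s => gsq n (phi s)) (- r) 0.

Definition shift (x : R -> R) (h : R) : R -> R := fun s => x (h + s).

Definition rhs (beta0 n delta k r : R) (x : R -> R) (t : R) : R :=
  - (beta0 / (1 + rpow (x t) n) + delta) * x t
  + k * (beta0 * x (t - r) / (1 + rpow (x (t - r)) n)).

Definition is_solution (beta0 n delta k r : R) (phi x : R -> R) : Prop :=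
  (forall s, - r <= s <= 0 -> x s = phi s) /\
  (forall t, - r <= t -> 0 <= x t) /\
  (forall t, 0 < t -> derivable_pt_lim x t (rhs beta0 n delta k r x t)) /\
  (forall eps, 0 < eps -> exists d, 0 < d /\ forall h, 0 < h < d ->
      Rabs ((x h - x 0) / h - rhs beta0 n delta k r x 0) < eps).

(* Main.v *)
Require Import Defs.
From Stdlib Require Import Reals Lra Lia Psatz ClassicalEpsilon FunctionalExtensionality.
Open Scope R_scope.

Lemma cont_eps (f : R -> R) (t : R) :
  (forall eps, 0 < eps -> exists d, 0 < d /\ forall y, Rabs (y - t) < d -> Rabs (f y - f t) < eps) ->
  continuity_pt f t.
Proof.
  intros H eps Heps. destruct (H eps Heps) as [d [Hd H']].
  exists d; split; [exact Hd|]. intros y [_ Hy]. simpl in *. unfold R_dist in *. now apply H'.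
Qed.

Lemma rpow_nonneg (y n : R) : 0 <= rpow y n.
Proof. unfold rpow. destruct (Rle_dec y 0); [lra|]. unfold Rpower. left; apply exp_pos. Qed.

Lemma rpow_cont (n y : R) : 0 < n -> continuity_pt (fun y => rpow y n) y.
Proof.
  intros Hn. destruct (Rlt_le_dec 0 y) as [Hy|Hy].
  - apply cont_eps. intros eps He.
    assert (Hc : continuity_pt (fun y => Rpower y n) y).
    { apply derivable_continuous_pt. exists (n * Rpower y (n-1)). now apply derivable_pt_lim_power. }
    destruct (Hc eps He) as [d [Hd H']]. exists (Rmin d y). split. { apply Rmin_pos; lra. }
    intros z Hz. assert (Rabs (z - y) < d) by (eapply Rlt_le_trans; [exact Hz| apply Rmin_l]).
    assert (Rabs (z - y) < y) by (eapply Rlt_le_trans; [exact Hz| apply Rmin_r]).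
    assert (0 < z) by (apply Rabs_def2 in H0; lra).
    unfold rpow. destruct (Rle_dec z 0); [lra|]. destruct (Rle_dec y 0); [lra|].
    destruct (Req_dec z y) as [->|Hne]. { rewrite Rminus_diag, Rabs_R0; lra. }
    apply (H' z). split; [split; [exact I| auto]|]. exact H.
  - destruct Hy as [Hy|Hy].
    + apply cont_eps. intros eps He. exists (-y). split; [lra|]. intros z Hz.
      apply Rabs_def2 in Hz. unfold rpow. destruct (Rle_dec z 0); [|lra].
      destruct (Rle_dec y 0); [|lra]. rewrite Rminus_0_r, Rabs_R0; lra.
    + subst y. apply cont_eps. intros eps He. exists (exp (ln eps / n)). split; [apply exp_pos|].
      intros z Hz. unfold rpow at 2. destruct (Rle_dec 0 0); [|lra]. rewrite Rminus_0_r.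
      unfold rpow. destruct (Rle_dec z 0). { rewrite Rabs_R0; lra. }
      rewrite Rminus_0_r in Hz. rewrite Rabs_right in Hz by lra.
      unfold Rpower. rewrite Rabs_right by (left; apply exp_pos).
      rewrite <- (exp_ln eps He). apply exp_increasing.
      assert (ln z < ln eps / n).
      { rewrite <- (ln_exp (ln eps / n)). apply ln_increasing; lra. }
      assert (n * ln z < n * (ln eps / n)) by (apply Rmult_lt_compat_l; lra).
      replace (n * (ln eps / n)) with (ln eps) in H0 by (field; lra). lra.
Qed.

Lemma F_cont (n s : R) : 0 < n -> continuity_pt (fun s => 2 * s / (1 + rpow s n)) s.
Proof.
  intros Hn. apply continuity_pt_div.
  - apply continuity_pt_mult; [apply continuity_pt_const; intros ? ?; reflexivity | apply derivable_continuous_pt, derivable_pt_id].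
  - apply continuity_pt_plus; [apply continuity_pt_const; intros ? ?; reflexivity | now apply rpow_cont].
  - pose proof (rpow_nonneg s n). lra.
Qed.

Lemma gsq_cont (n s : R) : 0 < n -> continuity_pt (fun y => gsq n y) s.
Proof.
  intros Hn. unfold gsq. apply continuity_pt_div.
  - apply derivable_continuous_pt. exists (INR 2 * s ^ (2 - 1)). apply derivable_pt_lim_pow.
  - apply (continuity_pt_comp (fun y => 1 + rpow y n) (fun z => z ^ 2)).
    + apply continuity_pt_plus; [apply continuity_pt_const; intros ? ?; reflexivity | now apply rpow_cont].
    + apply derivable_continuous_pt. eexists. apply derivable_pt_lim_pow.
  - pose proof (rpow_nonneg s n). apply pow_nonzero. lra.
Qed.

Lemma Rint_eq f a b (pr : Riemann_integrable f a b) : Rint f a b = RiemannInt pr.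
Proof.
  unfold Rint. destruct excluded_middle_informative as [H|H].
  - apply RiemannInt_P5.
  - exfalso. apply H. exists pr. exact I.
Qed.

Arguments Rint_eq {f a b}.
Definition contR (f : R -> R) := forall x, continuity_pt f x.

Lemma contR_int f a b : contR f -> Riemann_integrable f a b.
Proof.
  intros Hf. destruct (Rle_dec a b).
  - apply continuity_implies_RiemannInt; auto.
  - apply RiemannInt_P1, continuity_implies_RiemannInt; [lra| auto].
Qed.

Arguments contR_int {f} a b.
Lemma Rint_chasles f a b c : contR f -> Rint f a b + Rint f b c = Rint f a c.
Proof.
  intros Hf. rewrite (Rint_eq (contR_int a b Hf)), (Rint_eq (contR_int b c Hf)), (Rint_eq (contR_int a c Hf)).
  apply RiemannInt_P26.
Qed.

Arguments Rint_chasles {f} a b c.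
Lemma Rint_refl f a : Rint f a a = 0.
Proof. rewrite (Rint_eq (RiemannInt_P7 f a)). apply RiemannInt_P9. Qed.

Lemma dlim_local f g u l a b : a < u < b -> (forall v, a < v < b -> f v = g v) ->
  derivable_pt_lim g u l -> derivable_pt_lim f u l.
Proof.
  intros Hu Heq Hg eps He. destruct (Hg eps He) as [d Hd].
  assert (Hp : 0 < Rmin d (Rmin (u - a) (b - u))).
  { apply Rmin_pos; [apply cond_pos| apply Rmin_pos; lra]. }
  exists (mkposreal _ Hp). intros h Hh0 Hh. simpl in Hh.
  assert (Rabs h < d) by (eapply Rlt_le_trans; [exact Hh| apply Rmin_l]).
  assert (Rabs h < Rmin (u - a) (b - u)) by (eapply Rlt_le_trans; [exact Hh| apply Rmin_r]).
  assert (Rabs h < u - a) by (eapply Rlt_le_trans; [exact H0| apply Rmin_l]).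
  assert (Rabs h < b - u) by (eapply Rlt_le_trans; [exact H0| apply Rmin_r]).
  apply Rabs_def2 in H1. apply Rabs_def2 in H2.
  rewrite (Heq (u + h)) by lra. rewrite (Heq u) by lra. now apply Hd.
Qed.

Lemma FTC_Rint f c u : contR f -> derivable_pt_lim (fun v => Rint f c v) u (f u).
Proof.
  intros Hf. set (a := Rmin c u - 1). set (b := Rmax c u + 1).
  assert (h : a <= b) by (unfold a, b; pose proof (Rmin_l c u); pose proof (Rmax_l c u); lra).
  assert (C0 : forall x, a <= x <= b -> continuity_pt f x) by auto.
  set (P := primitive h (FTC_P1 h C0)).
  assert (HP : forall v, a <= v <= b -> P v = Rint f a v).
  { intros v Hv. unfold P, primitive. destruct (Rle_dec a v); [|lra].
    destruct (Rle_dec v b); [|lra]. symmetry. apply Rint_eq. }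
  assert (Hc : a <= c <= b) by (unfold a, b; pose proof (Rmin_l c u); pose proof (Rmax_l c u); lra).
  assert (Hu : a < u < b) by (unfold a, b; pose proof (Rmin_r c u); pose proof (Rmax_r c u); lra).
  apply (dlim_local (fun v => Rint f c v) (fun v => P v - P c) u (f u) a b Hu).
  - intros v Hv. rewrite !HP by lra. rewrite <- (Rint_chasles a c v Hf). ring.
  - replace (f u) with (f u - 0) by ring. apply derivable_pt_lim_minus.
    + apply RiemannInt_P28. lra.
    + apply derivable_pt_lim_const.
Qed.

Arguments FTC_Rint {f} c u.
Lemma Rint_shift f h a b : contR f ->
  Rint (fun s => f (h + s)) a b = Rint f (h + a) (h + b).
Proof.
  intros Hf.
  assert (Hfs : contR (fun s => f (h + s))).
  { intros x. apply (continuity_pt_comp (fun s => h + s) f).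
    - apply derivable_continuous_pt. eexists. apply derivable_pt_lim_plus; [apply derivable_pt_lim_const|apply derivable_pt_lim_id].
    - apply Hf. }
  set (T := fun u => Rint (fun s => f (h + s)) a u - Rint f (h + a) (h + u)).
  assert (HT : forall u, derivable_pt_lim T u 0).
  { intros u. unfold T. replace 0 with (f (h + u) - f (h + u) * 1) by ring.
    apply derivable_pt_lim_minus.
    - apply (FTC_Rint a u Hfs).
    - apply (derivable_pt_lim_comp (fun v => h + v) (fun w => Rint f (h + a) w)).
      + replace 1 with (0 + 1) by ring. apply derivable_pt_lim_plus; [apply derivable_pt_lim_const|apply derivable_pt_lim_id].
      + apply FTC_Rint; auto. }
  set (pr := fun u => exist (fun l => derivable_pt_lim T u l) 0 (HT u) : derivable_pt T u).
  assert (Hc := null_derivative_1 T pr (fun u => eq_refl)).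
  assert (T b = T a) by apply Hc.
  unfold T in H. rewrite !Rint_refl in H. lra.
Qed.

Lemma Rint_ext f g a b : a <= b -> contR g -> (forall s, a <= s <= b -> f s = g s) -> Rint f a b = Rint g a b.
Proof.
  intros Hab Hg Heq.
  assert (pg := contR_int a b Hg).
  assert (pf : Riemann_integrable f a b).
  { apply (@Riemann_integrable_ext g f a b). - intros x Hx. rewrite Rmin_left, Rmax_right in Hx by lra. symmetry; auto.
    - exact pg. }
  rewrite (Rint_eq pf), (Rint_eq pg). apply RiemannInt_P18; auto. intros; apply Heq; lra.
Qed.

Ltac fl := field; repeat split; try lra.

Lemma chain_right (g u : R -> R) g' R0 :
  derivable_pt_lim g (u 0) g' ->
  (forall eps, 0 < eps -> exists d, 0 < d /\ forall h, 0 < h < d -> Rabs ((u h - u 0) / h - R0) < eps) ->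
  forall eps, 0 < eps -> exists d, 0 < d /\ forall h, 0 < h < d ->
    Rabs ((g (u h) - g (u 0)) / h - g' * R0) < eps.
Proof.
  intros Hg Hu eps He.
  set (M := Rabs R0 + 1). assert (HM : 0 < M) by (unfold M; pose proof (Rabs_pos R0); lra).
  set (G1 := Rabs g' + 1). assert (HG1 : 0 < G1) by (unfold G1; pose proof (Rabs_pos g'); lra).
  assert (HG1' : Rabs g' <= G1) by (unfold G1; lra).
  assert (HMR : Rabs R0 + 1 = M) by reflexivity.
  clearbody M G1.
  assert (He1 : 0 < eps / (2 * M)) by (apply Rdiv_lt_0_compat; lra).
  destruct (Hg _ He1) as [dg Hdg].
  assert (He2 : 0 < Rmin 1 (eps / (2 * G1))) by (apply Rmin_pos; [lra| apply Rdiv_lt_0_compat; lra]).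
  destruct (Hu _ He2) as [d1 [Hd1 Hu1]].
  assert (Hdg0 : 0 < dg / M) by (apply Rdiv_lt_0_compat; [apply cond_pos| lra]).
  exists (Rmin d1 (dg / M)). split; [apply Rmin_pos; lra|].
  intros h [Hh0 Hh].
  assert (Hhd1 : h < d1) by (eapply Rlt_le_trans; [exact Hh| apply Rmin_l]).
  assert (Hhdg : h < dg / M) by (eapply Rlt_le_trans; [exact Hh| apply Rmin_r]).
  set (q := (u h - u 0) / h).
  assert (Hq : Rabs (q - R0) < Rmin 1 (eps / (2 * G1))) by (apply Hu1; lra).
  assert (Hq1 : Rabs (q - R0) < 1) by (eapply Rlt_le_trans; [exact Hq| apply Rmin_l]).
  assert (Hq2 : Rabs (q - R0) < eps / (2 * G1)) by (eapply Rlt_le_trans; [exact Hq| apply Rmin_r]).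
  assert (HqM : Rabs q < M).
  { rewrite <- HMR. replace q with ((q - R0) + R0) by ring. pose proof (Rabs_triang (q - R0) R0). lra. }
  set (k := u h - u 0).
  assert (Hk : k = q * h) by (unfold q, k; fl).
  assert (Hg'q : Rabs g' * Rabs (q - R0) <= eps / 2).
  { apply Rle_trans with (G1 * (eps / (2 * G1))).
    - apply Rmult_le_compat; try apply Rabs_pos; lra.
    - right; fl. }
  destruct (Req_dec k 0) as [Hk0|Hk0].
  - assert (q = 0). { rewrite Hk0 in Hk. symmetry in Hk. apply Rmult_integral in Hk. lra. }
    replace (u h) with (u 0) by (unfold k in Hk0; lra).
    replace ((g (u 0) - g (u 0)) / h - g' * R0) with (g' * (q - R0)) by (rewrite H; fl).
    rewrite Rabs_mult. lra.
  - assert (Hkd : Rabs k < dg).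
    { rewrite Hk, Rabs_mult, (Rabs_right h) by lra.
      apply Rle_lt_trans with (M * h). { apply Rmult_le_compat_r; lra. }
      apply Rlt_le_trans with (M * (dg / M)). { apply Rmult_lt_compat_l; lra. }
      right; fl. }
    specialize (Hdg k Hk0 Hkd). set (E := (g (u 0 + k) - g (u 0)) / k) in Hdg.
    assert (Heq : (g (u h) - g (u 0)) / h = E * q).
    { unfold E. replace (u 0 + k) with (u h) by (unfold k; ring).
      assert (q <> 0). { intro Hq0. apply Hk0. rewrite Hk, Hq0; ring. }
      rewrite Hk. field. repeat split; try assumption; apply Rgt_not_eq; lra. }
    rewrite Heq. replace (E * q - g' * R0) with ((E - g') * q + g' * (q - R0)) by ring.
    eapply Rle_lt_trans; [apply Rabs_triang|]. rewrite !Rabs_mult.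
    assert (Rabs (E - g') * Rabs q < eps / 2).
    { apply Rle_lt_trans with (eps / (2 * M) * Rabs q).
      - apply Rmult_le_compat_r; [apply Rabs_pos| lra].
      - apply Rlt_le_trans with (eps / (2 * M) * M). { apply Rmult_lt_compat_l; lra. }
        right; field; lra. }
    lra.
Qed.

Lemma right_cont (x : R -> R) R0 :
  (forall eps, 0 < eps -> exists d, 0 < d /\ forall h, 0 < h < d -> Rabs ((x h - x 0) / h - R0) < eps) ->
  forall eps, 0 < eps -> exists d, 0 < d /\ forall h, 0 < h < d -> Rabs (x h - x 0) < eps.
Proof.
  intros H eps He. destruct (H 1 Rlt_0_1) as [d [Hd H']].
  set (M := Rabs R0 + 1). assert (HM : 0 < M) by (unfold M; pose proof (Rabs_pos R0); lra).
  assert (HMR : Rabs R0 + 1 = M) by reflexivity. clearbody M.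
  exists (Rmin d (eps / M)). split. { apply Rmin_pos; [lra| apply Rdiv_lt_0_compat; lra]. }
  intros h [Hh0 Hh].
  assert (h < d) by (eapply Rlt_le_trans; [exact Hh| apply Rmin_l]).
  assert (h < eps / M) by (eapply Rlt_le_trans; [exact Hh| apply Rmin_r]).
  specialize (H' h ltac:(lra)).
  assert (Hq : Rabs ((x h - x 0) / h) < M).
  { rewrite <- HMR. replace ((x h - x 0) / h) with (((x h - x 0) / h - R0) + R0) by ring.
    pose proof (Rabs_triang ((x h - x 0) / h - R0) R0). lra. }
  replace (x h - x 0) with (((x h - x 0) / h) * h) by (field; lra).
  rewrite Rabs_mult, (Rabs_right h) by lra.
  apply Rlt_trans with (M * h). { apply Rmult_lt_compat_r; lra. }
  apply Rlt_le_trans with (M * (eps / M)). { apply Rmult_lt_compat_l; lra. }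
  right; field; lra.
Qed.

Lemma X_cont (r : R) (phi x : R -> R) R0 :
  0 < r ->
  continuous_on phi (- r) 0 ->
  (forall s, - r <= s <= 0 -> x s = phi s) ->
  (forall t, 0 < t -> exists l, derivable_pt_lim x t l) ->
  (forall eps, 0 < eps -> exists d, 0 < d /\ forall h, 0 < h < d -> Rabs ((x h - x 0) / h - R0) < eps) ->
  contR (fun t => x (Rmax t (- r))).
Proof.
  intros Hr Hphi Hxphi Hder Hright t. apply cont_eps. intros eps He.
  destruct (Rlt_le_dec t (- r)) as [Ht|Ht].
  - exists (- r - t). split; [lra|]. intros y Hy. apply Rabs_def2 in Hy.
    rewrite !Rmax_right by lra. rewrite Rminus_diag, Rabs_R0; lra.
  - rewrite (Rmax_left t) by lra.
    destruct (Rlt_le_dec 0 t) as [Ht0|Ht0].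
    + destruct (Hder t Ht0) as [l Hl].
      assert (Hc : continuity_pt x t) by (apply derivable_continuous_pt; exists l; exact Hl).
      destruct (Hc eps He) as [d [Hd H']]. exists (Rmin d t). split; [apply Rmin_pos; lra|].
      intros y Hy.
      assert (Rabs (y - t) < d) by (eapply Rlt_le_trans; [exact Hy| apply Rmin_l]).
      assert (Rabs (y - t) < t) by (eapply Rlt_le_trans; [exact Hy| apply Rmin_r]).
      apply Rabs_def2 in H0. rewrite Rmax_left by lra.
      destruct (Req_dec y t) as [->|Hne]. { rewrite Rminus_diag, Rabs_R0; lra. }
      apply (H' y). split; [split; [exact I| auto]|]. exact H.
    + assert (He2 : 0 < eps / 2) by lra.
      destruct (Hphi t (conj Ht Ht0) _ He2) as [d1 [Hd1 H1]].
      destruct (right_cont x R0 Hright _ He2) as [d2 [Hd2 H2]].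
      exists (Rmin d1 d2). split; [apply Rmin_pos; lra|].
      intros y Hy.
      assert (Hy1 : Rabs (y - t) < d1) by (eapply Rlt_le_trans; [exact Hy| apply Rmin_l]).
      assert (Hy2 : Rabs (y - t) < d2) by (eapply Rlt_le_trans; [exact Hy| apply Rmin_r]).
      apply Rabs_def2 in Hy1. apply Rabs_def2 in Hy2.
      rewrite (Hxphi t) by lra.
      destruct (Rle_dec y (- r)) as [Hyr|Hyr].
      * rewrite Rmax_right by lra. rewrite Hxphi by lra.
        apply Rlt_trans with (eps / 2); [|lra]. apply H1; [lra|].
        apply Rabs_def1; lra.
      * rewrite Rmax_left by lra.
        destruct (Rle_dec y 0) as [Hy0|Hy0].
        -- rewrite Hxphi by lra. apply Rlt_trans with (eps / 2); [|lra]. apply H1; [lra|]. apply Rabs_def1; lra.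
        -- replace (x y - phi t) with ((x y - x 0) + (phi 0 - phi t)) by (rewrite (Hxphi 0) by lra; ring).
           eapply Rle_lt_trans; [apply Rabs_triang|].
           assert (Rabs (x y - x 0) < eps / 2) by (apply H2; lra).
           assert (Rabs (phi 0 - phi t) < eps / 2) by (apply H1; [lra| apply Rabs_def1; lra]).
           lra.
Qed.

Lemma contR_shift f h : contR f -> contR (fun s => f (h + s)).
Proof.
  intros Hf x. apply (continuity_pt_comp (fun s => h + s) f).
  - apply derivable_continuous_pt. eexists. apply derivable_pt_lim_plus; [apply derivable_pt_lim_const|apply derivable_pt_lim_id].
  - apply Hf.
Qed.

Lemma algebra_ineq (beta0 n delta k y z : R) :
  0 < beta0 -> 0 < delta -> 0 < k -> 0 <= y -> 0 <= z ->
  2 * y / (1 + rpow y n) * (- (beta0 / (1 + rpow y n) + delta) * y + k * (beta0 * z / (1 + rpow z n)))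
  + k * beta0 * (gsq n y - gsq n z) <= 2 * (k * beta0 - beta0 - delta) * gsq n y.
Proof.
  intros Hb Hd Hk Hy Hz. unfold gsq.
  pose proof (rpow_nonneg y n). pose proof (rpow_nonneg z n).
  set (p := 1 + rpow y n) in *. set (q := 1 + rpow z n) in *.
  assert (Hp : 1 <= p) by (unfold p; lra). assert (Hq : 1 <= q) by (unfold q; lra).
  clearbody p q.
  set (a := y / p). set (b := z / q).
  assert (Ha : 0 <= a) by (unfold a; apply Rmult_le_pos; [lra| left; apply Rinv_0_lt_compat; lra]).
  assert (Hya : a <= y).
  { unfold a. apply Rmult_le_reg_r with p; [lra|]. replace (y / p * p) with y by (field; lra). nra. }
  replace (2 * y / p * (- (beta0 / p + delta) * y + k * (beta0 * z / q)) + k * beta0 * (y ^ 2 / p ^ 2 - z ^ 2 / q ^ 2))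
    with (2 * a * (- beta0 * a - delta * y + k * beta0 * b) + k * beta0 * (a * a - b * b))
    by (unfold a, b; field; lra).
  replace (2 * (k * beta0 - beta0 - delta) * (y ^ 2 / p ^ 2)) with (2 * (k * beta0 - beta0 - delta) * (a * a))
    by (unfold a; field; lra).
  assert (0 <= k * beta0 * ((a - b) * (a - b))) by (apply Rmult_le_pos; [apply Rmult_le_pos; lra| apply Rle_0_sqr]).
  assert (0 <= 2 * delta * a * (y - a)) by (apply Rmult_le_pos; [apply Rmult_le_pos; lra| lra]).
  nra.
Qed.

Theorem mainTheorem3 (beta0 n delta r k : R)
  (Hb : 0 < beta0) (Hn : 0 < n) (Hd : 0 < delta) (Hr : 0 < r) (Hk : 0 < k)
  (phi x : R -> R)
  (Hphi_cont : continuous_on phi (- r) 0)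
  (Hphi_nn : forall s, - r <= s <= 0 -> 0 <= phi s)
  (Hsol : is_solution beta0 n delta k r phi x) :
  (* limsup_{h->0+} (V(x_h) - V(phi))/h <= 2 (k beta0 - beta0 - delta) phi(0)^2/(1+phi(0)^n)^2 *)
  forall eps, 0 < eps -> exists d, 0 < d /\ forall h, 0 < h < d ->
    (Vfun beta0 n k r (shift x h) - Vfun beta0 n k r phi) / h
      <= 2 * (k * beta0 - beta0 - delta) * gsq n (phi 0) + eps.
Proof.
  destruct Hsol as [Hxphi [Hxnn [Hder Hright]]].
  set (R0 := rhs beta0 n delta k r x 0) in *.
  set (X := fun t => x (Rmax t (- r))).
  assert (HX : contR X).
  { apply (X_cont r phi x R0 Hr Hphi_cont Hxphi); auto.
    intros t Ht. eexists. apply Hder; exact Ht. }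
  set (gX := fun s => gsq n (X s)).
  assert (HgX : contR gX).
  { intros s. apply (continuity_pt_comp X (fun y => gsq n y)); [apply HX| apply gsq_cont; exact Hn]. }
  set (F := fun s => 2 * s / (1 + rpow s n)).
  assert (HF : contR F) by (intros s; apply F_cont; exact Hn).
  set (P := fun v => Rint gX 0 v).
  set (Q := fun v => P v - P (v - r)).
  assert (HV0 : Vfun beta0 n k r phi = Gfun n (x 0) + k * beta0 * Q 0).
  { unfold Vfun. rewrite (Hxphi 0) by lra. f_equal. f_equal.
    rewrite (Rint_ext (fun s => gsq n (phi s)) gX (- r) 0); [| lra| exact HgX|].
    - unfold Q, P. replace (0 - r) with (- r) by ring. rewrite Rint_refl.
      pose proof (Rint_chasles 0 (- r) 0 HgX) as Hc. rewrite Rint_refl in Hc. lra.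
    - intros s Hs. unfold gX, X. rewrite Rmax_left by lra. rewrite Hxphi by lra. reflexivity. }
  assert (HVh : forall h, 0 < h -> Vfun beta0 n k r (shift x h) = Gfun n (x h) + k * beta0 * Q h).
  { intros h Hh. unfold Vfun, shift. rewrite Rplus_0_r. f_equal. f_equal.
    rewrite (Rint_ext (fun s => gsq n (x (h + s))) (fun s => gX (h + s)) (- r) 0); [| lra| apply contR_shift; exact HgX|].
    - rewrite Rint_shift by exact HgX. unfold Q, P. rewrite Rplus_0_r.
      pose proof (Rint_chasles 0 (h - r) h HgX) as Hc. replace (h + - r) with (h - r) by ring. lra.
    - intros s Hs. unfold gX, X. rewrite Rmax_left by lra. reflexivity. }
  assert (HQ : derivable_pt_lim Q 0 (gX 0 - gX (0 - r))).
  { unfold Q. apply derivable_pt_lim_minus.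
    - apply FTC_Rint; exact HgX.
    - replace (gX (0 - r)) with (gX (0 - r) * 1) by ring.
      apply (derivable_pt_lim_comp (fun v => v - r) P 0 1 (gX (0 - r))).
      + replace 1 with (1 - 0) by ring. apply derivable_pt_lim_minus; [apply derivable_pt_lim_id| apply derivable_pt_lim_const].
      + apply FTC_Rint; exact HgX. }
  assert (HG : derivable_pt_lim (Gfun n) (x 0) (F (x 0))) by (apply (FTC_Rint 0 (x 0) HF)).
  assert (Hineq : F (x 0) * R0 + k * beta0 * (gX 0 - gX (0 - r)) <= 2 * (k * beta0 - beta0 - delta) * gsq n (phi 0)).
  { unfold gX, X, F, R0, rhs. rewrite Rmax_left by lra. rewrite Rmax_right by lra.
    replace (0 - r) with (- r) by ring. rewrite <- (Hxphi 0) by lra.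
    apply algebra_ineq; auto; apply Hxnn; lra. }
  intros eps He.
  assert (He2 : 0 < eps / 2) by lra.
  destruct (chain_right (Gfun n) x (F (x 0)) R0 HG Hright _ He2) as [d1 [Hd1 H1]].
  assert (Hkb : 0 < k * beta0) by (apply Rmult_lt_0_compat; lra).
  assert (He3 : 0 < eps / (2 * (k * beta0))) by (apply Rdiv_lt_0_compat; lra).
  destruct (HQ _ He3) as [d2 H2].
  exists (Rmin d1 d2). split; [apply Rmin_pos; [lra| apply cond_pos]|].
  intros h [Hh0 Hh].
  assert (h < d1) by (eapply Rlt_le_trans; [exact Hh| apply Rmin_l]).
  assert (h < d2) by (eapply Rlt_le_trans; [exact Hh| apply Rmin_r]).
  rewrite HVh, HV0 by lra.
  specialize (H1 h ltac:(lra)).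
  specialize (H2 h ltac:(lra) ltac:(rewrite Rabs_right; lra)).
  rewrite Rplus_0_l in H2.
  apply Rabs_def2 in H1. apply Rabs_def2 in H2.
  assert (Hm : k * beta0 * ((Q h - Q 0) / h - (gX 0 - gX (0 - r))) < k * beta0 * (eps / (2 * (k * beta0)))).
  { apply Rmult_lt_compat_l; lra. }
  replace (k * beta0 * (eps / (2 * (k * beta0)))) with (eps / 2) in Hm by (field; lra).
  replace ((Gfun n (x h) + k * beta0 * Q h - (Gfun n (x 0) + k * beta0 * Q 0)) / h)
    with ((Gfun n (x h) - Gfun n (x 0)) / h + k * beta0 * ((Q h - Q 0) / h)) by (field; lra).
  lra.
Qed.
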